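(* For $n \ge 3$, the commutator subgroup $TW_n'$ is generated by the elements $$w\,(\tau_j\tau_{j+1}\tau_j\tau_{j+1})\,w^{-1} \quad\text{and}\quad w\,(\tau_{j+1}\tau_j\tau_{j+1}\tau_j)\,w^{-1},$$ where $j$ ranges over $\{1,2,\dots,n-2\}$ and $w$ ranges over all products $w=\tau_{i_1}\tau_{i_2}\cdots\tau_{i_s}$ with $s\ge 0$ and $1 \le i_1 < i_2 < \dots < i_s < j$ (the empty product $w=1$ included).
   Context: For $n \ge 2$, the twin group $TW_n$ is the group with generators $\tau_1,\dots,\tau_{n-1}$ and defining relations $\tau_i^2=1$ for all $i$, and $\tau_i\tau_j=\tau_j\tau_i$ whenever $|i-j|>1$. $G'$ denotes the commutator subgroup of a group $G$. *)

(* Defs.v *)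
(* The twin group TW_n is modelled by its
   presentation: words in the generators tau_1..tau_{n-1} (a word is a
   seq nat of indices) modulo the congruence generated by the defining
   relations. Subgroups are described by membership of words. *)
From mathcomp Require Import all_boot.
Set Implicit Arguments. Unset Strict Implicit. Unset Printing Implicit Defensive.

Definition word := seq nat.

Definition valid_word (n : nat) (w : word) : bool := all (fun i => (0 < i < n)%N) w.

Inductive tw_eq (n : nat) : word -> word -> Prop :=
| tw_refl w : tw_eq n w w
| tw_sym u v : tw_eq n u v -> tw_eq n v u
| tw_trans u v w : tw_eq n u v -> tw_eq n v w -> tw_eq n u w
| tw_ctx x y a b : tw_eq n a b -> tw_eq n (x ++ a ++ y) (x ++ b ++ y)
| tw_sq i : (0 < i < n)%N -> tw_eq n [:: i; i] [::]
| tw_comm i j : (0 < i < n)%N -> (0 < j < n)%N -> (i.+1 < j)%N ->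
    tw_eq n [:: i; j] [:: j; i].

(* inverse of a word: since each tau_i is an involution, the reversed word *)
Definition winv (w : word) : word := rev w.

Definition in_gen (n : nat) (S : word -> Prop) (u : word) : Prop :=
  exists ws : seq word,
    (forall x, x \in ws -> S x \/ S (winv x)) /\ tw_eq n u (flatten ws).

Definition commutator_word (n : nat) (c : word) : Prop :=
  exists x y : word, [/\ valid_word n x, valid_word n y &
    c = winv x ++ winv y ++ x ++ y].

Definition in_TW_comm (n : nat) (u : word) : Prop :=
  in_gen n (commutator_word n) u.

Definition lemma_gen (n : nat) (g : word) : Prop :=
  exists (j : nat) (w : word),
    [/\ (0 < j)%N, (j <= n - 2)%N,
        sorted ltn w, all (fun i => (0 < i < j)%N) w &
        g = w ++ [:: j; j.+1; j; j.+1] ++ winv w \/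
        g = w ++ [:: j.+1; j; j.+1; j] ++ winv w].

(* Main.v *)
Require Import Defs.
From mathcomp Require Import all_boot zify.
From Stdlib Require Import Setoid Morphisms.
Set Implicit Arguments. Unset Strict Implicit. Unset Printing Implicit Defensive.

Section S.
Variable n : nat.
Local Notation "u ~~ v" := (tw_eq n u v) (at level 70).
Lemma tw_catl x a b : a ~~ b -> x ++ a ~~ x ++ b.
Proof. move=> h; have := tw_ctx x [::] h; by rewrite !cats0. Qed.
Lemma tw_catr y a b : a ~~ b -> a ++ y ~~ b ++ y.
Proof. move=> h; exact: (tw_ctx [::] y h). Qed.
Global Instance tw_equiv : Equivalence (tw_eq n).
Proof. split; [exact: tw_refl|exact: tw_sym|exact: tw_trans]. Qed.
Global Instance cat_proper : Proper (tw_eq n ==> tw_eq n ==> tw_eq n) (@cat nat).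
Proof. move=> a b h c d h'. apply: tw_trans (tw_catr _ h) (tw_catl _ h'). Qed.
Global Instance cons_proper : Proper (eq ==> tw_eq n ==> tw_eq n) (@cons nat).
Proof. move=> a b -> c d h. exact: (tw_catl [:: b] h). Qed.

Lemma tw_rev u v : u ~~ v -> rev u ~~ rev v.
Proof.
elim=> {u v}.
- move=> w; reflexivity.
- move=> u v _ h; by symmetry.
- move=> u v w _ h1 _ h2; by rewrite h1.
- move=> x y a b _ h; rewrite !rev_cat h; reflexivity.
- by move=> i h; apply: tw_sq.
- move=> i j hi hj hij /=; symmetry; exact: tw_comm.
Qed.

Lemma C2 i (s : seq nat) : (0 < i < n) -> i :: i :: s ~~ s.
Proof. move=> h. exact: (tw_catr s (tw_sq h)). Qed.

Lemma SW i j (s : seq nat) : (0 < i < n) -> (0 < j < n) -> (i.+1 < j) || (j.+1 < i) ->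
  i :: j :: s ~~ j :: i :: s.
Proof.
move=> hi hj /orP[h|h].
- exact: (tw_catr s (tw_comm hi hj h)).
- symmetry; exact: (tw_catr s (tw_comm hj hi h)).
Qed.

Lemma CB i (r s : seq nat) : (0 < i < n) ->
  (forall x, x \in r -> (0 < x < n) && ((i.+1 < x) || (x.+1 < i))) ->
  i :: r ++ s ~~ r ++ i :: s.
Proof.
move=> hi; elim: r => [|a r IH] hr /=; first reflexivity.
have ha := hr a (mem_head _ _). rewrite SW //; try lia.
rewrite IH //; first reflexivity.
move=> x hx; apply: hr; by rewrite in_cons hx orbT.
Qed.

Lemma CBB (r t s : seq nat) :
  (forall x, x \in r -> (0 < x < n)) ->
  (forall x y, x \in r -> y \in t -> (0 < y < n) && ((x.+1 < y) || (y.+1 < x))) ->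
  r ++ t ++ s ~~ t ++ r ++ s.
Proof.
elim: r => [|a r IH] hv hr /=; first reflexivity.
rewrite IH; last first.
- move=> x y hx hy; apply: hr => //; by rewrite in_cons hx orbT.
- move=> x hx; apply: hv; by rewrite in_cons hx orbT.
rewrite CB; first reflexivity.
- apply: hv; exact: mem_head.
- move=> y hy; have := hr a y (mem_head _ _) hy. lia.
Qed.

Lemma RR (r s : seq nat) : (forall x, x \in r -> (0 < x < n)) ->
  (rev r ++ r ++ s ~~ s) /\ (r ++ rev r ++ s ~~ s).
Proof.
elim: r s => [|a r IH] s hr /=; first by split; reflexivity.
have ha := hr a (mem_head _ _).
have hr' : forall x, x \in r -> (0 < x < n).
  move=> x hx; apply: hr; by rewrite in_cons hx orbT.
rewrite rev_cons -cats1 -!catA /=; split.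
- rewrite C2 //. exact: (proj1 (IH s hr')).
- rewrite (proj2 (IH (a :: s) hr')) C2 //; reflexivity.
Qed.

Lemma RRl (r s : seq nat) : (forall x, x \in r -> (0 < x < n)) -> rev r ++ r ++ s ~~ s.
Proof. move=> h; exact: (proj1 (RR s h)). Qed.
Lemma RRr (r s : seq nat) : (forall x, x \in r -> (0 < x < n)) -> r ++ rev r ++ s ~~ s.
Proof. move=> h; exact: (proj2 (RR s h)). Qed.

Lemma flatten_rev (ws : seq word) : rev (flatten ws) = flatten (rev (map (@rev nat) ws)).
Proof.
elim: ws => [|w ws IH] //=. by rewrite rev_cat IH rev_cons flatten_rcons.
Qed.

Variable S : word -> Prop.
Lemma ig_nil : in_gen n S [::].
Proof. exists [::]; split=> //; reflexivity. Qed.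
Lemma ig_S u : S u -> in_gen n S u.
Proof. move=> h; exists [:: u]; split; last by rewrite /= cats0; reflexivity.
move=> x; rewrite inE => /eqP ->; by left. Qed.
Lemma ig_cat u v : in_gen n S u -> in_gen n S v -> in_gen n S (u ++ v).
Proof.
move=> [w1 [h1 e1]] [w2 [h2 e2]]; exists (w1 ++ w2); split.
- move=> x; rewrite mem_cat => /orP[]; [exact: h1|exact: h2].
- by rewrite flatten_cat e1 e2; reflexivity.
Qed.
Lemma ig_inv u : in_gen n S u -> in_gen n S (rev u).
Proof.
move=> [ws [h e]]; exists (rev (map (@rev nat) ws)); split.
- move=> x; rewrite mem_rev => /mapP [y hy ->]; rewrite /winv revK.
  case: (h y hy); by [right|left].
- rewrite -flatten_rev; exact: tw_rev.
Qed.
Lemma ig_tw u v : u ~~ v -> in_gen n S v -> in_gen n S u.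
Proof. move=> e [ws [h e']]; exists ws; split=> //; by rewrite e. Qed.
End S.

Arguments CB {n}. Arguments CBB {n}. Arguments RRl {n}. Arguments RRr {n}.
Arguments C2 {n}. Arguments SW {n}.

Lemma ig_mono n (S T : word -> Prop) u : (forall x, S x -> in_gen n T x) ->
  in_gen n S u -> in_gen n T u.
Proof.
move=> hST [ws [h e]]; apply: ig_tw e _.
elim: ws h => [|w ws IH] h /=; first exact: ig_nil.
apply: ig_cat; last by apply: IH => x hx; apply: h; rewrite in_cons hx orbT.
case: (h w (mem_head _ _)) => hw; first exact: hST.
rewrite -[w]revK; apply: ig_inv; exact: hST.
Qed.

Definition Cset (n : nat) (g : word) : Prop := exists k m,
  [/\ 0 < k, (k + m).+2 <= n &
   g = iota k m ++ [:: k + m; (k + m).+1; k + m; (k + m).+1] ++ rev (iota k m)].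

Ltac side := intros; repeat match goal with
 | H : is_true (_ \in rev _) |- _ => rewrite mem_rev in H
 | H : is_true (_ \in iota _ _) |- _ => rewrite mem_iota in H
 | H : is_true (_ \in _ ++ _) |- _ => rewrite mem_cat in H; case/orP: H => H
 | H : is_true (_ \in _ :: _) |- _ => rewrite in_cons in H; case/orP: H => H
 | H : is_true (_ \in [::]) |- _ => by rewrite in_nil in H
 | H : is_true (_ == _) |- _ => move/eqP: H => H
 | H : is_true (?x \in ?s), Hs : forall y, is_true (y \in ?s) -> _ |- _ => move: (Hs x H); clear H
end; lia.

Lemma revs1 (x : nat) : rev [:: x] = [:: x].
Proof. by []. Qed.

Lemma iota_split a b m : a <= b -> b + 2 <= a + m ->
  iota a m = iota a (b - a) ++ b :: b.+1 :: iota b.+2 (a + m - b - 2).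
Proof.
move=> h1 h2; rewrite {1}(_ : m = (b - a) + (2 + (a + m - b - 2))); last lia.
rewrite !iotaD (_ : a + (b - a) = b) /=; last lia.
by rewrite (_ : b + 2 = b.+2) //; lia.
Qed.

Lemma revc (x : nat) s : rev (x :: s) = rev s ++ [:: x].
Proof. by rewrite rev_cons cats1. Qed.

Section N.
Variable n : nat.
Local Notation "u ~~ v" := (tw_eq n u v) (at level 70).
Local Notation Hm := (in_gen n (Cset n)).

Lemma CBr (r t : seq nat) : (forall x, x \in r -> (0 < x < n)) ->
  (forall x y, x \in r -> y \in t -> (0 < y < n) && ((x.+1 < y) || (y.+1 < x))) ->
  r ++ t ~~ t ++ r.
Proof. move=> h1 h2; have := CBB _ _ [::] h1 h2; by rewrite !cats0. Qed.

Lemma CE (X : seq nat) i : 0 < i < n -> X ++ [:: i; i] ~~ X.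
Proof. move=> h; have := tw_catl X (tw_sq h); by rewrite cats0. Qed.

Lemma conj_far i (X : seq nat) : 0 < i < n ->
  (forall x, x \in X -> (0 < x < n) && ((i.+1 < x) || (x.+1 < i))) ->
  i :: X ++ [:: i] ~~ X.
Proof. move=> h1 h2; rewrite CB //; exact: CE. Qed.

Lemma CB4 (i a b c d : nat) (s : seq nat) : (0 < i < n) ->
  (forall x, x \in [:: a; b; c; d] -> (0 < x < n) && ((i.+1 < x) || (x.+1 < i))) ->
  i :: a :: b :: c :: d :: s ~~ a :: b :: c :: d :: i :: s.
Proof. move=> h1 h2; exact: (CB i [:: a; b; c; d] s h1 h2). Qed.

Lemma CBB4 (r : seq nat) (a b c d : nat) (s : seq nat) :
  (forall x, x \in r -> (0 < x < n)) ->
  (forall x y, x \in r -> y \in [:: a; b; c; d] -> (0 < y < n) && ((x.+1 < y) || (y.+1 < x))) ->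
  r ++ a :: b :: c :: d :: s ~~ a :: b :: c :: d :: r ++ s.
Proof. move=> h1 h2; exact: (CBB r [:: a; b; c; d] s h1 h2). Qed.

Lemma CBe (i : nat) (r : seq nat) : (0 < i < n) ->
  (forall x, x \in r -> (0 < x < n) && ((i.+1 < x) || (x.+1 < i))) ->
  r ++ [:: i] ~~ i :: r.
Proof. move=> h1 h2; have := CB i r [::] h1 h2; rewrite cats0 => ->; reflexivity. Qed.

Lemma Hc k m j : 0 < k -> j = k + m -> j.+2 <= n ->
  Hm (iota k m ++ [:: j; j.+1; j; j.+1] ++ rev (iota k m)).
Proof. move=> h1 -> h2; apply: ig_S; by exists k, m. Qed.

Lemma Hci k m j : 0 < k -> j = k + m -> j.+2 <= n ->
  Hm (iota k m ++ [:: j.+1; j; j.+1; j] ++ rev (iota k m)).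
Proof.
move=> h1 h2 h3; have := ig_inv (Hc h1 h2 h3).
by rewrite !rev_cat revK catA.
Qed.

End N.
Arguments Hc {n k m j}. Arguments CE {n}. Arguments CBe {n}. Arguments CB4 {n}. Arguments CBB4 {n}. Arguments CBr {n}. Arguments conj_far {n}.
Arguments Hci {n k m j}.

Section G.
Variable n : nat.
Local Notation "u ~~ v" := (tw_eq n u v) (at level 70).
Local Notation Hm := (in_gen n (Cset n)).

Lemma conj_gen i g : 0 < i < n -> Cset n g -> Hm (i :: g ++ [:: i]).
Proof.
move=> hi [k [m [hk hj ->]]].
set j := k + m in hj *; have ej : j = k + m by [].
clearbody j.
case: (ltnP i.+1 k) => h1.
  apply: ig_tw (Hc hk ej hj). apply: conj_far => //; side.
case: (eqVneq i.+1 k) => h2.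
  subst k. have -> : i :: (iota i.+1 m ++ [:: j; j.+1; j; j.+1] ++ rev (iota i.+1 m)) ++ [:: i]
     = iota i m.+1 ++ [:: j; j.+1; j; j.+1] ++ rev (iota i m.+1).
    by rewrite /= revc -!catA.
  apply: Hc; lia.
case: (eqVneq i k) => h3.
  subst k. case: m ej hj => [|m] ej hj.
    rewrite /= addn0 in ej; subst j.
    apply: ig_tw (ig_inv (Hc (m:=0) hk (esym (addn0 i)) hj)).
    rewrite /= C2 //; reflexivity.
  apply: ig_tw (Hc (k:=i.+1) (m:=m) (j:=j) _ _ hj); try lia.
  rewrite /= revc -!catA /= C2 // -catA CE //; reflexivity.
case: (ltnP i j) => h4.
  case: i hi h1 h2 h3 h4 => [|h] hi h1 h2 h3 h4; first lia.
  rewrite (@iota_split k h m); try lia.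
  apply: ig_tw (ig_cat (ig_cat (@Hci n k (h - k) h _ _ _) (@Hc n h.+2 (k + m - h - 2) j _ _ _))
                       (@Hc n k (h - k) h _ _ _)); try lia.
  have hq : forall x, x \in iota k (h - k) -> (0 < x < h) by side.
  have hr : forall x, x \in iota h.+2 (k + m - h - 2) -> (h.+2 <= x < j) by side.
  move: (iota k (h - k)) (iota h.+2 _) hq hr => q r hq hr.
  rewrite !rev_cat !revc -!catA /=.
  setoid_rewrite (CB h.+1 q). setoid_rewrite (CBe h.+1 (rev q)).
  setoid_rewrite (CBB (rev q) r). setoid_rewrite (CBB4 (rev q) j j.+1 j j.+1).
  setoid_rewrite (CBB (rev q) (rev r)). setoid_rewrite (RRl q).
  setoid_rewrite (CB h r). setoid_rewrite (CB4 h j j.+1 j j.+1).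
  setoid_rewrite (CB h (rev r)). setoid_rewrite (C2 h).
  reflexivity.
  all: try side.
have hki : k < i by lia.
case: (eqVneq i j) => h5.
  subst i. case: m ej hj h4 => [|m'] ej hj h4; first lia.
  apply: ig_tw (ig_cat (ig_cat (@Hci n k m' (k + m') _ _ _) (@Hci n k m'.+1 j _ _ _))
                       (@Hc n k m' (k + m') _ _ _)); try lia.
  have -> : iota k m'.+1 = iota k m' ++ [:: k + m'] by rewrite -addn1 iotaD.
  have -> : j = (k + m').+1 by lia.
  have hq : forall x, x \in iota k m' -> 0 < x < k + m' by side.
  have hn : (k + m').+3 <= n by lia.
  have hh : 0 < k + m' by lia.
  move: (k + m') (iota k m') hq hn hh => h q hq hn hh.
  rewrite !rev_cat !revs1 -!catA /=.
  setoid_rewrite (CB h.+1 q). setoid_rewrite (CBe h.+1 (rev q)).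
  setoid_rewrite (RRl q). setoid_rewrite (RRl q).
  setoid_rewrite (C2 h). setoid_rewrite (C2 h). setoid_rewrite (C2 h.+1).
  reflexivity.
  all: try side.
case: (eqVneq i j.+1) => h6.
  subst i. apply: ig_tw (Hci hk ej hj).
  have hp : forall x, x \in iota k m -> 0 < x < j by side.
  move: (iota k m) hp => p hp.
  rewrite -!catA /=.
  setoid_rewrite (CB j.+1 p). setoid_rewrite (CBe j.+1 (rev p)).
  setoid_rewrite (C2 j.+1). reflexivity.
  all: try side.
case: (eqVneq i j.+2) => h7.
  subst i.
  apply: ig_tw (ig_cat (ig_cat (@Hci n k m.+1 j.+1 _ _ _) (@Hc n k m j _ _ _))
                       (@Hc n j.+1 0 j.+1 _ _ _)); try lia.
  have -> : iota k m.+1 = iota k m ++ [:: j] by rewrite -addn1 iotaD ej.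
  have hp : forall x, x \in iota k m -> 0 < x < j by side.
  move: (iota k m) hp => p hp.
  rewrite !rev_cat !revs1 -!catA /=.
  setoid_rewrite (CB j.+2 p). setoid_rewrite (CBe j.+2 (rev p)).
  setoid_rewrite (RRl p). setoid_rewrite (CBr (rev p) [:: j.+1; j.+2; j.+1; j.+2]).
  rewrite /=.
  setoid_rewrite (C2 j). setoid_rewrite (C2 j.+1). setoid_rewrite (C2 j.+1).
  setoid_rewrite (SW j.+2 j (j.+1 :: j :: j.+1 :: j.+2 :: rev p)).
  setoid_rewrite (SW j.+2 j (j.+2 :: j.+1 :: j.+2 :: rev p)).
  setoid_rewrite (C2 j.+2). reflexivity.
  all: try side.
apply: ig_tw (Hc hk ej hj). apply: conj_far => //; side.
Qed.
End G.

Section H.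
Variable n : nat.
Local Notation "u ~~ v" := (tw_eq n u v) (at level 70).
Local Notation Hm := (in_gen n (Cset n)).

Lemma conj_letter i u : 0 < i < n -> Hm u -> Hm (i :: u ++ [:: i]).
Proof.
move=> hi [ws [h e]].
apply: (@ig_tw _ _ _ (i :: flatten ws ++ [:: i])); first by rewrite e; reflexivity.
elim: ws h {e} => [|x ws IH] h /=.
  apply: ig_tw (ig_nil _ _). exact: (C2 i [::] hi).
apply: (@ig_tw _ _ _ ((i :: x ++ [:: i]) ++ (i :: flatten ws ++ [:: i]))).
  rewrite /= -!catA /=. setoid_rewrite (C2 i (flatten ws ++ [:: i])) => //; reflexivity.
apply: ig_cat; last by apply: IH => y hy; apply: h; rewrite in_cons hy orbT.
case: (h x (mem_head _ _)) => hx; first exact: conj_gen.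
have := ig_inv (conj_gen hi hx). by rewrite revc rev_cat revs1 /winv revK.
Qed.

Lemma conj_word (w : seq nat) u : (forall x, x \in w -> 0 < x < n) -> Hm u -> Hm (rev w ++ u ++ w).
Proof.
elim: w u => [|a w IH] u hw hu; first by rewrite /= cats0.
have ha := hw a (mem_head _ _).
have := IH (a :: u ++ [:: a]) (fun x hx => hw x (@mem_behead _ (a :: w) x hx)) (conj_letter ha hu).
by rewrite revc -!catA /= -catA.
Qed.

Definition P (x y : seq nat) := rev x ++ rev y ++ x ++ y.

Lemma comm_letters i k : 0 < i < n -> 0 < k < n -> Hm (P [:: i] [:: k]).
Proof.
move=> hi hk; rewrite /P /=.
case: (eqVneq i k) => [<-|hik].
  apply: ig_tw (ig_nil _ _). apply: tw_trans (C2 i _ hi) _. exact: (C2 i [::] hi).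
case: (eqVneq k i.+1) => [e|h1].
  subst k.
  apply: (@ig_tw n _ _ _ _ (@Hc n i 0 i _ _ _)); try lia. reflexivity.
case: (eqVneq i k.+1) => [e|h2].
  subst i.
  apply: (@ig_tw n _ _ _ _ (@Hci n k 0 k _ _ _)); try lia. reflexivity.
apply: ig_tw (ig_nil _ _).
setoid_rewrite (SW i k [:: i; k]); try lia.
setoid_rewrite (C2 i [:: k]) => //. exact: (C2 k [::] hk).
Qed.

Lemma P_cat (a b c : seq nat) : (forall x, x \in b -> 0 < x < n) ->
  (forall x, x \in c -> 0 < x < n) ->
  Hm (P a c) -> Hm (P b c) -> Hm (P (a ++ b) c).
Proof.
move=> hb hc h1 h2.
apply: ig_tw (ig_cat (conj_word hb h1) h2).
rewrite /P !rev_cat -!catA.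
setoid_rewrite (RRr b (rev c ++ b ++ c)) => //.
setoid_rewrite (RRr c (b ++ c)) => //. reflexivity.
Qed.

Lemma comm1 (x : seq nat) k : (forall y, y \in x -> 0 < y < n) -> 0 < k < n ->
  Hm (P x [:: k]).
Proof.
move=> hx hk; elim: x hx => [|a x IH] hx.
  apply: ig_tw (ig_nil _ _). exact: (C2 k [::] hk).
have ha := hx a (mem_head _ _).
apply: (P_cat (a:=[:: a])).
- move=> y hy; apply: hx; by rewrite in_cons hy orbT.
- move=> y; rewrite inE => /eqP ->; done.
- exact: comm_letters.
- apply: IH => y hy; apply: hx; by rewrite in_cons hy orbT.
Qed.

Lemma comm_all (x y : seq nat) : (forall z, z \in x -> 0 < z < n) ->
  (forall z, z \in y -> 0 < z < n) -> Hm (P x y).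
Proof.
move=> hx hy; elim: x hx => [|a x IH] hx.
  apply: ig_tw (ig_nil _ _). have := RRl y [::] hy. by rewrite cats0.
have ha := hx a (mem_head _ _).
apply: (P_cat (a:=[:: a])).
- move=> z hz; apply: hx; by rewrite in_cons hz orbT.
- exact: hy.
- have := ig_inv (comm1 hy ha). by rewrite /P !rev_cat !revK -!catA.
- apply: IH => z hz; apply: hx; by rewrite in_cons hz orbT.
Qed.

End H.

Lemma Cset_lemma n g : Cset n g -> lemma_gen n g.
Proof.
move=> [k [m [hk hj ->]]]; exists (k + m), (iota k m); split.
- lia.
- lia.
- exact: iota_ltn_sorted.
- apply/allP => x; rewrite mem_iota; lia.
- by left.
Qed.

Lemma lemma_comm n g : lemma_gen n g -> in_TW_comm n g.
Proof.
move=> [j [w [hj hjn hs hw hg]]].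
have hw' : forall x, x \in w -> 0 < x < n.
  move=> x /(allP hw); lia.
have key : in_TW_comm n (w ++ [:: j; j.+1; j; j.+1] ++ rev w).
  apply: (@ig_tw n _ _ (winv (w ++ j :: rev w) ++ winv (w ++ j.+1 :: rev w) ++
                         (w ++ j :: rev w) ++ (w ++ j.+1 :: rev w))).
    rewrite /winv !rev_cat !revc !revK -!catA /=.
    setoid_rewrite (RRl w) => //. setoid_rewrite (RRl w) => //. setoid_rewrite (RRl w) => //.
    reflexivity.
  apply: ig_S; exists (w ++ j :: rev w), (w ++ j.+1 :: rev w); split => //.
  - apply/allP => x hx; side.
  - apply/allP => x hx; side.
case: hg => ->; first exact: key.
have := ig_inv key. by rewrite !rev_cat revK -!catA.
Qed.

Unset Implicit Arguments.
Theorem lemma2p1 (n : nat) : (3 <= n)%N ->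
  forall u : word, valid_word n u ->
    (in_TW_comm n u <-> in_gen n (lemma_gen n) u).
Proof.
move=> hn u hu; split.
- apply: ig_mono => c [x [y [hx hy ->]]].
  apply: (ig_mono (S := Cset n)); first by move=> g hg; apply: ig_S; exact: Cset_lemma.
  apply: comm_all; by apply/allP.
- apply: ig_mono => g hg; exact: lemma_comm.
Qed.
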